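(* Let $\mathbb X$ be a separable reflexive Banach space, let $x_1,\ldots,x_k\in\mathbb X$, and let $\hat x_\ast$ be any minimizer of $y\mapsto\sum_{j=1}^k\|y-x_j\|$ over $y\in\mathrm{co}(x_1,\ldots,x_k)$, the convex hull of $\{x_1,\ldots,x_k\}$. Fix $\alpha\in(0,\tfrac12)$ and $r>0$, and set $C_\alpha=\frac{2(1-\alpha)}{1-2\alpha}$. If $z\in\mathrm{co}(x_1,\ldots,x_k)$ satisfies $\|\hat x_\ast-z\|>C_\alpha r$, then there exists $J\subseteq\{1,\ldots,k\}$ with $|J|>\alpha k$ such that $\|x_j-z\|>r$ for all $j\in J$. *)

(* Defs.v *)
From Stdlib Require Import Reals List.
Open Scope R_scope.

Record NormedSpace (X : Type) := {
  vzero : X;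
  vadd : X -> X -> X;
  vopp : X -> X;
  vscal : R -> X -> X;
  vnorm : X -> R;
  vadd_assoc : forall x y z, vadd x (vadd y z) = vadd (vadd x y) z;
  vadd_comm : forall x y, vadd x y = vadd y x;
  vadd_0 : forall x, vadd x vzero = x;
  vadd_opp : forall x, vadd x (vopp x) = vzero;
  vscal_1 : forall x, vscal 1 x = x;
  vscal_assoc : forall a b x, vscal a (vscal b x) = vscal (a * b) x;
  vscal_distr_v : forall a x y, vscal a (vadd x y) = vadd (vscal a x) (vscal a y);
  vscal_distr_s : forall a b x, vscal (a + b) x = vadd (vscal a x) (vscal b x);
  vnorm_eq0 : forall x, vnorm x = 0 -> x = vzero;
  vnorm_scal : forall a x, vnorm (vscal a x) = Rabs a * vnorm x;
  vnorm_triangle : forall x y, vnorm (vadd x y) <= vnorm x + vnorm y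
}.

Arguments vzero {X} _.
Arguments vadd {X} _ _ _.
Arguments vopp {X} _ _.
Arguments vscal {X} _ _ _.
Arguments vnorm {X} _ _.

Section Defs.
Context {X : Type} (N : NormedSpace X).

Definition vsub (x y : X) : X := vadd N x (vopp N y).
Definition dist (x y : X) : R := vnorm N (vsub x y).

Definition complete : Prop :=
  forall u : nat -> X,
    (forall eps, 0 < eps -> exists M, forall m n, (M <= m)%nat -> (M <= n)%nat ->
        dist (u m) (u n) < eps) ->
    exists l, forall eps, 0 < eps -> exists M, forall n, (M <= n)%nat -> dist (u n) l < eps.

Definition separable : Prop :=
  exists d : nat -> X, forall x eps, 0 < eps -> exists n, dist x (d n) < eps.

Definition is_dual (f : X -> R) : Prop :=
  (forall x y, f (vadd N x y) = f x + f y) /\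
  (forall a x, f (vscal N a x) = a * f x) /\
  (exists c, 0 <= c /\ forall x, Rabs (f x) <= c * vnorm N x).

(* Elements of the bidual: linear functionals on the dual that are bounded
   w.r.t. the dual (operator) norm; a functional f is bounded by c in the dual
   norm iff |f x| <= c ||x|| for all x. *)
Definition is_bidual (Phi : (X -> R) -> R) : Prop :=
  (forall f g, is_dual f -> is_dual g -> Phi (fun x => f x + g x) = Phi f + Phi g) /\
  (forall a f, is_dual f -> Phi (fun x => a * f x) = a * Phi f) /\
  (exists M, 0 <= M /\ forall f c, is_dual f -> 0 <= c ->
       (forall x, Rabs (f x) <= c * vnorm N x) -> Rabs (Phi f) <= M * c).

Definition reflexive : Prop :=
  forall Phi, is_bidual Phi -> exists x, forall f, is_dual f -> Phi f = f x.

Fixpoint vsum (f : nat -> X) (n : nat) : X :=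
  match n with O => vzero N | S m => vadd N (vsum f m) (f m) end.

Fixpoint rsum (f : nat -> R) (n : nat) : R :=
  match n with O => 0 | S m => rsum f m + f m end.

Definition in_conv_hull (x : nat -> X) (k : nat) (y : X) : Prop :=
  exists lam : nat -> R,
    (forall j, (j < k)%nat -> 0 <= lam j) /\
    rsum lam k = 1 /\
    y = vsum (fun j => vscal N (lam j) (x j)) k.

Definition sum_dist (x : nat -> X) (k : nat) (y : X) : R :=
  rsum (fun j => vnorm N (vsub y (x j))) k.

End Defs.

(* Main.v *)
Require Import Defs.
From Stdlib Require Import Reals List Lra Lia.
Open Scope R_scope.

Section Aux.
Context {X : Type} (N : NormedSpace X).

Lemma add0l (x : X) : vadd N (vzero N) x = x.
Proof. rewrite vadd_comm, vadd_0; reflexivity. Qed.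

Lemma inv_uniq (x y : X) : vadd N y x = vzero N -> y = vopp N x.
Proof.
  intro H. rewrite <- (vadd_0 _ N y), <- (vadd_opp _ N x), vadd_assoc, H, add0l.
  reflexivity.
Qed.

Lemma scal0 (x : X) : vscal N 0 x = vzero N.
Proof.
  assert (H : vscal N 0 x = vadd N (vscal N 0 x) (vscal N 0 x)).
  { rewrite <- vscal_distr_s. f_equal. ring. }
  set (s := vscal N 0 x) in *.
  transitivity (vadd N (vadd N s s) (vopp N s)).
  - rewrite <- vadd_assoc, vadd_opp, vadd_0. reflexivity.
  - rewrite <- H. apply vadd_opp.
Qed.

Lemma opp_scal (x : X) : vopp N x = vscal N (-1) x.
Proof.
  symmetry. apply inv_uniq.
  rewrite <- (vscal_1 _ N x) at 2. rewrite <- vscal_distr_s.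
  replace (-1 + 1) with 0 by ring. apply scal0.
Qed.

Lemma norm_opp (x : X) : vnorm N (vopp N x) = vnorm N x.
Proof.
  rewrite opp_scal, vnorm_scal. rewrite Rabs_left by lra. ring.
Qed.

Lemma opp_add (x y : X) : vopp N (vadd N x y) = vadd N (vopp N x) (vopp N y).
Proof. rewrite !opp_scal, vscal_distr_v. reflexivity. Qed.

Lemma opp_opp (x : X) : vopp N (vopp N x) = x.
Proof. rewrite !opp_scal, vscal_assoc. replace (-1 * -1) with 1 by ring. apply vscal_1. Qed.

Lemma dist_sym (x y : X) : vnorm N (vsub N x y) = vnorm N (vsub N y x).
Proof.
  unfold vsub. rewrite <- norm_opp, opp_add, opp_opp, vadd_comm. reflexivity.
Qed.

Lemma sub_split (x w y : X) : vsub N x y = vadd N (vsub N x w) (vsub N w y).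
Proof.
  unfold vsub. rewrite vadd_assoc. f_equal.
  rewrite <- (vadd_assoc _ N x), (vadd_comm _ N (vopp N w)), vadd_opp, vadd_0.
  reflexivity.
Qed.

Lemma dist_tri (x w y : X) : vnorm N (vsub N x y) <= vnorm N (vsub N x w) + vnorm N (vsub N w y).
Proof. rewrite (sub_split x w y). apply vnorm_triangle. Qed.
End Aux.

Theorem mainTheorem3 (X : Type) (N : NormedSpace X)
  (Hcomplete : complete N) (Hsep : separable N) (Hrefl : reflexive N)
  (k : nat) (x : nat -> X) (xhat : X)
  (Hxhat_co : in_conv_hull N x k xhat)
  (Hxhat_min : forall y, in_conv_hull N x k y -> sum_dist N x k xhat <= sum_dist N x k y)
  (alpha r : R) (Halpha : 0 < alpha < 1/2) (Hr : 0 < r)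
  (z : X) (Hz_co : in_conv_hull N x k z)
  (Hfar : vnorm N (vsub N xhat z) > (2 * (1 - alpha) / (1 - 2 * alpha)) * r) :
  exists J : list nat,
    NoDup J /\ (forall j, In j J -> (j < k)%nat) /\
    INR (length J) > alpha * INR k /\
    (forall j, In j J -> vnorm N (vsub N (x j) z) > r).
Proof.
  set (p := fun j => if Rlt_dec r (vnorm N (vsub N (x j) z)) then true else false).
  set (f := fun n => length (filter p (seq 0 n))).
  exists (filter p (seq 0 k)).
  split; [apply NoDup_filter, seq_NoDup|].
  split; [intros j Hj; apply filter_In in Hj; destruct Hj as [Hj _]; apply in_seq in Hj; lia|].
  split.
  2:{ intros j Hj; apply filter_In in Hj; destruct Hj as [_ Hj]. unfold p in Hj.
      destruct (Rlt_dec _ _); [lra|discriminate]. }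
  destruct (Rlt_dec (alpha * INR k) (INR (length (filter p (seq 0 k))))) as [H|H]; [exact H|].
  exfalso. apply Rnot_lt_le in H. fold (f k) in H.
  set (d := vnorm N (vsub N xhat z)).
  assert (Hind : forall n, rsum (fun j => vnorm N (vsub N xhat (x j)) - vnorm N (vsub N z (x j))) n
                  >= (INR n - INR (f n)) * (d - 2 * r) - INR (f n) * d).
  { induction n.
    - simpl. unfold f. simpl. lra.
    - simpl rsum. unfold f. rewrite seq_S, filter_app, length_app. simpl filter.
      fold (f n). rewrite S_INR.
      assert (T1 := dist_tri N xhat (x n) z).
      assert (T2 := dist_tri N z xhat (x n)).
      assert (S1 := dist_sym N z (x n)).
      assert (S2 := dist_sym N z xhat).
      fold d in T1, T2. rewrite S2 in T2. fold d in T2.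
      unfold p. simpl plus. rewrite plus_INR.
      destruct (Rlt_dec r (vnorm N (vsub N (x n) z))) as [Hc|Hc];
        simpl length; simpl INR; lra. }
  assert (Hk : (0 < k)%nat).
  { destruct k; [|lia]. destruct Hz_co as [lam [_ [H1 _]]]. simpl in H1. lra. }
  assert (Hmin := Hxhat_min z Hz_co).
  assert (Hdiff : forall n, rsum (fun j => vnorm N (vsub N xhat (x j)) - vnorm N (vsub N z (x j))) n
                   = sum_dist N x n xhat - sum_dist N x n z).
  { induction n; simpl; unfold sum_dist in *; simpl; [ring|]. rewrite IHn. ring. }
  specialize (Hind k). rewrite Hdiff in Hind.
  apply lt_0_INR in Hk.
  set (F := INR (f k)) in *. set (K := INR k) in *.
  set (C := 2 * (1 - alpha) / (1 - 2 * alpha)) in *.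
  assert (HC : C * (1 - 2 * alpha) = 2 * (1 - alpha)) by (unfold C; field; lra).
  assert (H1 : (K - 2 * F) * d <= 2 * (K - F) * r).
  { replace ((K - F) * (d - 2 * r) - F * d) with ((K - 2 * F) * d - 2 * (K - F) * r) in Hind by ring.
    lra. }
  assert (H2' : 0 < K * (1 - 2 * alpha)) by (apply Rmult_lt_0_compat; lra).
  assert (H2 : 0 < K - 2 * F).
  { replace (K * (1 - 2 * alpha)) with (K - 2 * (alpha * K)) in H2' by ring. lra. }
  fold d in Hfar.
  assert (H3 : (K - 2 * F) * (C * r) < (K - 2 * F) * d) by (apply Rmult_lt_compat_l; lra).
  assert (H4 : (K - 2 * F) * (C * r) * (1 - 2 * alpha) < 2 * (K - F) * r * (1 - 2 * alpha))
    by (apply Rmult_lt_compat_r; lra).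
  assert (H5 : (K - 2 * F) * (2 * (1 - alpha)) * r < 2 * (K - F) * (1 - 2 * alpha) * r).
  { rewrite <- HC. lra. }
  apply Rmult_lt_reg_r in H5; [|lra]. lra.
Qed.
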